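(* Let $\Bbbk$ be a field of characteristic zero, $S=\Bbbk[x_1,x_2,x_3,x_4]$, $d\geq 2$, and $I=(x_1^d,x_2^d,x_3^d,x_4^d,x_1^{d-1}x_2,x_{3}^{d-1}x_4)$. Then $S/I$ fails the WLP in degree $2d-3$.
   Context: For a monomial ideal $I$, $A=S/I$ fails the WLP in degree $i$ if $\times(x_1+\cdots+x_4): A_i\to A_{i+1}$ is neither injective nor surjective. *)

(* Defs.v *)
From HB Require Import structures.
From mathcomp Require Import all_boot all_order all_algebra.
From mathcomp.multinomials Require Import mpoly.
Set Implicit Arguments. Unset Strict Implicit. Unset Printing Implicit Defensive.
Import GRing.Theory.
Local Open Scope ring_scope.

Definition in_ideal (F : fieldType) (n : nat) (gs : seq {mpoly F[n]})
  (f : {mpoly F[n]}) : Prop :=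
  exists h : 'I_(size gs) -> {mpoly F[n]}, f = \sum_(j < size gs) h j * gs`_j.

Definition lin_form (F : fieldType) (n : nat) : {mpoly F[n]} :=
  \sum_(i < n) 'X_i.

(* A = S/I; A_i = S_i / (I cap S_i).  Multiplication by l : A_i -> A_{i+1}
   is injective / surjective, written out on representatives. *)
Definition mult_injective (F : fieldType) (n : nat) (gs : seq {mpoly F[n]})
  (i : nat) : Prop :=
  forall f : {mpoly F[n]}, f \is i.-homog ->
    in_ideal gs (lin_form F n * f) -> in_ideal gs f.

Definition mult_surjective (F : fieldType) (n : nat) (gs : seq {mpoly F[n]})
  (i : nat) : Prop :=
  forall g : {mpoly F[n]}, g \is i.+1.-homog ->
    exists2 f : {mpoly F[n]}, f \is i.-homog & in_ideal gs (g - lin_form F n * f).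

Definition fails_WLP_in (F : fieldType) (n : nat) (gs : seq {mpoly F[n]})
  (i : nat) : Prop :=
  ~ mult_injective gs i /\ ~ mult_surjective gs i.

(* Generators of I = (x1^d, x2^d, x3^d, x4^d, x1^(d-1) x2, x3^(d-1) x4),
   with variables x1..x4 indexed 0..3. *)
Definition gensI (F : fieldType) (d : nat) : seq {mpoly F[4]} :=
  [:: 'X_0 ^+ d; 'X_1 ^+ d; 'X_2 ^+ d; 'X_3 ^+ d;
      'X_0 ^+ d.-1 * 'X_1; 'X_2 ^+ d.-1 * 'X_3].

(* Main.v *)
Require Import Defs.
From HB Require Import structures.
From mathcomp Require Import all_boot all_order all_algebra.
From mathcomp.multinomials Require Import mpoly.
From mathcomp Require Import zify ring.
Set Implicit Arguments. Unset Strict Implicit. Unset Printing Implicit Defensive.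
Import GRing.Theory.
Local Open Scope ring_scope.

Section S.
Variable F : fieldType.
Notation P2 := {poly {poly F}}.
Notation inI := (@in_ideal F 4).
Definition ev (v : nat -> P2) (p : {mpoly F[4]}) : P2 :=
  mmap (polyC \o polyC) (fun i : 'I_4 => v (val i)) p.

Lemma evM v p q : ev v (p * q) = ev v p * ev v q.
Proof. by rewrite /ev rmorphM. Qed.
Lemma evX v (i : 'I_4) : ev v 'X_i = v i.
Proof. by rewrite /ev mmapX mmap1U. Qed.
Lemma evXn v (i : 'I_4) k : ev v ('X_i ^+ k) = v i ^+ k.
Proof. by rewrite /ev rmorphXn /= -/(ev v _) evX. Qed.
Lemma evD v p q : ev v (p + q) = ev v p + ev v q.
Proof. by rewrite /ev rmorphD. Qed.
Lemma evB v p q : ev v (p - q) = ev v p - ev v q.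
Proof. by rewrite /ev rmorphB. Qed.
Lemma ev_sum v (I : finType) (h : I -> {mpoly F[4]}) :
  ev v (\sum_i h i) = \sum_i ev v (h i).
Proof. by rewrite /ev rmorph_sum. Qed.

Lemma in_ideal0 (gs : seq {mpoly F[4]}) : inI gs 0.
Proof. by exists (fun _ => 0); rewrite big1 // => j _; rewrite mul0r. Qed.
Lemma in_idealD gs f g : inI gs f -> inI gs g -> inI gs (f + g).
Proof.
case=> h1 -> [h2 ->]; exists (fun j => h1 j + h2 j).
by rewrite -big_split /=; apply: eq_bigr => j _; rewrite mulrDl.
Qed.
Lemma in_idealM gs c f : inI gs f -> inI gs (c * f).
Proof.
case=> h ->; exists (fun j => c * h j).
by rewrite mulr_sumr; apply: eq_bigr => j _; rewrite mulrA.
Qed.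
Lemma in_ideal_gen gs (j : 'I_(size gs)) : inI gs gs`_j.
Proof.
exists (fun k => (k == j)%:R); rewrite (bigD1 j) //= eqxx mul1r big1 ?addr0 //.
by move=> k /negbTE ->; rewrite mul0r.
Qed.
Lemma in_ideal_sum gs (I : finType) (h : I -> {mpoly F[4]}) :
  (forall i, inI gs (h i)) -> inI gs (\sum_i h i).
Proof.
move=> H; apply: (big_ind (inI gs)) => //; [exact: in_ideal0|exact: in_idealD].
Qed.
Lemma in_idealMn gs f k : inI gs f -> inI gs (f *+ k).
Proof. by move=> H; rewrite -mulr_natl; apply: in_idealM. Qed.
Lemma in_idealN gs f : inI gs f -> inI gs (- f).
Proof. by move=> H; rewrite -mulN1r; apply: in_idealM. Qed.

Lemma coefMXn2 (p : P2) k j m : (k < m)%N -> ((p * 'X^m)`_k)`_j = 0.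
Proof. by move=> H; rewrite coefMXn H coef0. Qed.
Lemma coefMCXn2 (p : P2) k j m : (j < m)%N -> ((p * ('X^m)%:P)`_k)`_j = 0.
Proof. by move=> H; rewrite coefMC coefMXn H. Qed.


Lemma inI_ev_coef (gs : seq {mpoly F[4]}) v k j :
  (forall (r : P2) (t : 'I_(size gs)), ((r * ev v gs`_t)`_k)`_j = 0) ->
  forall f, inI gs f -> ((ev v f)`_k)`_j = 0.
Proof.
move=> H f [h ->]; rewrite ev_sum !coef_sum big1 // => t _.
by rewrite evM H.
Qed.

Notation X := ('X : P2).
Notation Y := (('X : {poly F})%:P : P2).

Definition vs (k : nat) : P2 :=
  match k with 0 => X | 1 => - X | 2 => Y | _ => - Y end.
Definition vt (k : nat) : P2 :=
  match k with 0 => Y | 1 => X | _ => 0 end.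

Lemma YXn k : Y ^+ k = ('X^k)%:P.
Proof. by rewrite rmorphXn. Qed.

Lemma vs_gens d (hd : (2 <= d)%N) (r : P2) (t : 'I_(size (gensI F d))) :
  ((r * ev vs (gensI F d)`_t)`_(d.-1))`_(d.-1) = 0.
Proof.
have d1 : d = (d.-1).+1 by lia.
case: t => [[|[|[|[|[|[|t]]]]]] ht] //=; rewrite ?evM ?evXn /=.
- by rewrite coefMXn2 //; lia.
- by rewrite exprNn mulrA coefMXn2 //; lia.
- by rewrite YXn coefMCXn2 //; lia.
- by rewrite exprNn mulrA YXn coefMCXn2 //; lia.
- by rewrite evX /= mulrN -exprSr -d1 mulrN coefN coefN coefMXn2 ?oppr0 //; lia.
- by rewrite evX /= mulrN -exprSr -d1 mulrN coefN coefN YXn coefMCXn2 ?oppr0 //; lia.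
Qed.

Lemma vt_gens d (hd : (2 <= d)%N) (r : P2) (t : 'I_(size (gensI F d))) :
  ((r * ev vt (gensI F d)`_t)`_(d.-1))`_(d.-2) = 0.
Proof.
have d1 : d = (d.-1).+1 by lia.
case: t => [[|[|[|[|[|[|t]]]]]] ht] //=; rewrite ?evM ?evXn /=.
- by rewrite YXn coefMCXn2 //; lia.
- by rewrite coefMXn2 //; lia.
- by rewrite d1 expr0n mulr0 coef0 coef0.
- by rewrite d1 expr0n mulr0 coef0 coef0.
- rewrite evX /= YXn mulrA coefMX.
  have -> : (d.-1 == 0)%N = false by lia.
  by rewrite coefMC coefMXn; case: ifP => //; lia.
- by rewrite evX /= mulr0 mulr0 coef0 coef0.
Qed.

Definition l1 : {mpoly F[4]} := 'X_0 + 'X_1.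
Definition l2 : {mpoly F[4]} := 'X_2 + 'X_3.

Lemma linE : lin_form F 4 = l1 + l2.
Proof. by rewrite /lin_form !big_ord_recr big_ord0 /= add0r /l1 /l2 !addrA. Qed.

Lemma homX (i : 'I_4) : ('X_i : {mpoly F[4]}) \is 1.-homog.
Proof. by rewrite dhomogX; apply/eqP; apply: mdeg1. Qed.

Lemma homl1 : l1 \is 1.-homog.
Proof. by apply: dhomogD; apply: homX. Qed.
Lemma homl2 : - l2 \is 1.-homog.
Proof. by rewrite dhomogN; apply: dhomogD; apply: homX. Qed.

Definition fk d : {mpoly F[4]} :=
  \sum_(i < (2 * d - 2)%N) l1 ^+ ((2 * d - 2).-1 - i) * (- l2) ^+ i.

Lemma hom_fk d : (2 <= d)%N -> fk d \is (2 * d - 3).-homog.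
Proof.
move=> hd; rewrite /fk; apply: (big_ind (fun p => p \is (2 * d - 3).-homog)).
- exact: dhomog0.
- by move=> p q; apply: dhomogD.
move=> i _; have -> : (2 * d - 3 = 1 * ((2 * d - 2).-1 - i) + 1 * i)%N.
  by have := ltn_ord i; lia.
by apply: dhomogM; apply: dhomogMn; [exact: homl1 | exact: homl2].
Qed.

Lemma lin_fk d : lin_form F 4 * fk d = l1 ^+ (2 * d - 2) - (- l2) ^+ (2 * d - 2).
Proof. by rewrite subrXX linE opprK /fk. Qed.


Lemma gen_in d (j : nat) (hj : (j < 6)%N) : inI (gensI F d) (gensI F d)`_j.
Proof. exact: (@in_ideal_gen (gensI F d) (Ordinal hj)). Qed.

Lemma pow_in d a b (i j k : 'I_4) (g : {mpoly F[4]}) :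
  inI (gensI F d) g -> ('X_i ^+ a * 'X_j ^+ b = 'X_k ^+ 0 * g) \/ False ->
  inI (gensI F d) ('X_i ^+ a * 'X_j ^+ b).
Proof. by move=> Hg [->|[]]; apply: in_idealM. Qed.

Lemma l1_in d : (2 <= d)%N -> inI (gensI F d) (l1 ^+ (2 * d - 2)).
Proof.
move=> hd; rewrite /l1 exprDn; apply: in_ideal_sum => i; apply: in_idealMn.
have hi := ltn_ord i.
case: (ltngtP i d.-1) => Hi.
- have -> : (2 * d - 2 - i = (2 * d - 2 - i - d) + d)%N by lia.
  rewrite exprD mulrAC; apply: in_idealM; exact: (gen_in d (j := 0) isT).
- have -> : (i = (i - d) + d :> nat)%N by lia.
  rewrite exprD mulrA; apply: in_idealM; exact: (gen_in d (j := 1) isT).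
- have -> : (2 * d - 2 - i = d.-2 + 1)%N by lia.
  have -> : (i = 1 + d.-2 :> nat)%N by lia.
  rewrite exprD exprD mulrA mulrAC -mulrA -mulrA mulrA.
  have -> : ('X_0 ^+ d.-2 * 'X_0 ^+ 1 = 'X_0 ^+ d.-1 :> {mpoly F[4]}).
    by rewrite -exprD; congr (_ ^+ _); lia.
  rewrite expr1 mulrCA; apply: in_idealM; exact: (gen_in d (j := 4) isT).
Qed.

Lemma l2_in d : (2 <= d)%N -> inI (gensI F d) ((- l2) ^+ (2 * d - 2)).
Proof.
move=> hd; rewrite exprNn; apply: in_idealM.
rewrite /l2 exprDn; apply: in_ideal_sum => i; apply: in_idealMn.
have hi := ltn_ord i.
case: (ltngtP i d.-1) => Hi.
- have -> : (2 * d - 2 - i = (2 * d - 2 - i - d) + d)%N by lia.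
  rewrite exprD mulrAC; apply: in_idealM; exact: (gen_in d (j := 2) isT).
- have -> : (i = (i - d) + d :> nat)%N by lia.
  rewrite exprD mulrA; apply: in_idealM; exact: (gen_in d (j := 3) isT).
- have -> : (2 * d - 2 - i = d.-2 + 1)%N by lia.
  have -> : (i = 1 + d.-2 :> nat)%N by lia.
  rewrite exprD exprD mulrA mulrAC -mulrA -mulrA mulrA.
  have -> : ('X_2 ^+ d.-2 * 'X_2 ^+ 1 = 'X_2 ^+ d.-1 :> {mpoly F[4]}).
    by rewrite -exprD; congr (_ ^+ _); lia.
  rewrite expr1 mulrCA; apply: in_idealM; exact: (gen_in d (j := 5) isT).
Qed.


Lemma evXp v p k : ev v (p ^+ k) = ev v p ^+ k.
Proof. by rewrite /ev rmorphXn. Qed.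
Lemma evN v p : ev v (- p) = - ev v p.
Proof. by rewrite /ev rmorphN. Qed.

Lemma vt_fk d : (2 <= d)%N ->
  ((ev vt (fk d))`_(d.-1))`_(d.-2) = ('C(2 * d - 3, d.-2))%:R.
Proof.
move=> hd; rewrite /fk.
have -> : (2 * d - 2 = (2 * d - 3).+1)%N by lia.
rewrite ev_sum big_ord_recl big1; last first.
  move=> i _; rewrite evM !evXp evN /l2 evD !evX /= addr0 oppr0 expr0n /=.
  by rewrite mulr0.
rewrite addr0 evM !evXp /l1 evD !evX /= expr0 mulr1 subn0 addrC exprDn.
rewrite !coef_sum.
have hk : (d.-2 < (2 * d - 3).+1)%N by lia.
rewrite (bigD1 (Ordinal hk)) //= big1 ?addr0.
  rewrite !coefMn YXn mulrC coefMXn.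
  have -> : (d.-1 < 2 * d - 3 - d.-2)%N = false by lia.
  have -> : (d.-1 - (2 * d - 3 - d.-2) = 0)%N by lia.
  by rewrite coefC eqxx coefXn eqxx.
move=> i /eqP Hi; rewrite !coefMn YXn mulrC coefMXn.
case: ifP => _; first by rewrite coef0 mul0rn.
rewrite coefC; case: ifP => _; last by rewrite coef0 mul0rn.
rewrite coefXn; have -> : (d.-2 == i)%N = false.
  by apply/negP => /eqP E; apply: Hi; apply: val_inj.
by rewrite mul0rn.
Qed.

End S.

Local Close Scope ring_scope.

Theorem lemma4p6 (F : fieldType) (charF0 : [pchar F]%R =i pred0)
  (d : nat) (hd : 2 <= d) :
  fails_WLP_in (gensI F d) (2 * d - 3).
Proof.
split.
- move=> Hinj.
  have Hin : @in_ideal F 4 (gensI F d) (lin_form F 4 * fk F d).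
    rewrite lin_fk; apply: in_idealD; first exact: l1_in.
    by apply: in_idealN; apply: l2_in.
  have Hf := Hinj (fk F d) (hom_fk F hd) Hin.
  have := inI_ev_coef (vt_gens hd) Hf.
  rewrite vt_fk //; apply/eqP.
  by move/pcharf0P: charF0 => ->; rewrite -lt0n bin_gt0; lia.
- move=> Hsurj.
  pose g : {mpoly F[4]} := ('X_0 ^+ d.-1 * 'X_2 ^+ d.-1)%R.
  have hg : g \is (2 * d - 3).+1.-homog.
    have -> : ((2 * d - 3).+1 = 1 * d.-1 + 1 * d.-1)%N by lia.
    by apply: dhomogM; apply: dhomogMn; apply: homX.
  case: (Hsurj g hg) => f _ Hin.
  have := inI_ev_coef (vs_gens hd) Hin.
  rewrite evB evM linE evD /l1 /l2 !evD !evX /= !subrr addr0 mul0r subr0.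
  rewrite /g evM !evXn /= YXn mulrC coefCM coefXn eqxx mulr1 coefXn eqxx.
  by move/eqP; rewrite oner_eq0.
Qed.
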